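(* Let $A$ and $B$ be C$^*$-algebras, where $A$ is unital with unit $1$. Let $p$ be a projection in $A$ and let $T:A\to B$ be a linear map which is a $^*$-homomorphism at $p$ and at $1-p$. Then $T$ is a Jordan $^*$-homomorphism.
   Context: A map $T:A\to B$ between C$^*$-algebras is a $^*$-homomorphism at $z\in A$ if for all $a,b\in A$ with $ab^*=z$ one has $T(ab^* )=T(a)T(b)^*=T(z)$, and for all $c,d\in A$ with $c^*d=z$ one has $T(c^*d)=T(c)^*T(d)=T(z)$. A Jordan $^*$-homomorphism is a linear map $T$ with $T(a\circ b)=T(a)\circ T(b)$ for all $a,b$, where $a\circ b=\frac12(ab+ba)$, and $T(x^* )=T(x)^*$ for all $x$. *)

(* Defs.v *)
From HB Require Import structures.
From mathcomp Require Import all_boot all_order all_algebra.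
From mathcomp Require Import complex.
From mathcomp Require Import all_classical all_reals.
Set Implicit Arguments. Unset Strict Implicit. Unset Printing Implicit Defensive.
Import Order.TTheory GRing.Theory Num.Theory.
Local Open Scope ring_scope.
Local Open Scope complex_scope.

Record cstar_struct (R : realType) (V : lmodType R[i]) := CstarStruct {
  cmul : V -> V -> V;
  cstar : V -> V;
  cnorm : V -> R;
  cmulA : forall x y z, cmul x (cmul y z) = cmul (cmul x y) z;
  cmulDl : forall x y z, cmul (x + y) z = cmul x z + cmul y z;
  cmulDr : forall x y z, cmul x (y + z) = cmul x y + cmul x z;
  cmulZl : forall (a : R[i]) x y, cmul (a *: x) y = a *: cmul x y;
  cmulZr : forall (a : R[i]) x y, cmul x (a *: y) = a *: cmul x y;
  cstarD : forall x y, cstar (x + y) = cstar x + cstar y;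
  cstarZ : forall (a : R[i]) x, cstar (a *: x) = a^* *: cstar x;
  cstarK : forall x, cstar (cstar x) = x;
  cstarM : forall x y, cstar (cmul x y) = cmul (cstar y) (cstar x);
  cnorm_ge0 : forall x, 0 <= cnorm x;
  cnorm_eq0 : forall x, cnorm x = 0 -> x = 0;
  cnormD : forall x y, cnorm (x + y) <= cnorm x + cnorm y;
  cnormZ : forall (a : R[i]) x, (cnorm (a *: x))%:C = `|a| * (cnorm x)%:C;
  cnormM : forall x y, cnorm (cmul x y) <= cnorm x * cnorm y;
  cnorm_cstar_id : forall x, cnorm (cmul (cstar x) x) = cnorm x ^+ 2;
  cnorm_complete : forall u : nat -> V,
    (forall e : R, 0 < e -> exists N : nat, forall m n : nat,
        (N <= m)%N -> (N <= n)%N -> cnorm (u m - u n) < e) ->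
    exists l : V, forall e : R, 0 < e -> exists N : nat, forall n : nat,
        (N <= n)%N -> cnorm (u n - l) < e
}.

Definition is_unit_elt (R : realType) (V : lmodType R[i]) (S : cstar_struct V)
  (one : V) : Prop :=
  forall x, cmul S one x = x /\ cmul S x one = x.

Definition is_projection (R : realType) (V : lmodType R[i]) (S : cstar_struct V)
  (p : V) : Prop :=
  cmul S p p = p /\ cstar S p = p.

Definition star_hom_at (R : realType) (A B : lmodType R[i])
  (SA : cstar_struct A) (SB : cstar_struct B) (T : A -> B) (z : A) : Prop :=
  (forall a b, cmul SA a (cstar SA b) = z ->
     T (cmul SA a (cstar SA b)) = cmul SB (T a) (cstar SB (T b))
     /\ cmul SB (T a) (cstar SB (T b)) = T z)
  /\
  (forall c d, cmul SA (cstar SA c) d = z ->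
     T (cmul SA (cstar SA c) d) = cmul SB (cstar SB (T c)) (T d)
     /\ cmul SB (cstar SB (T c)) (T d) = T z).

Definition jordan (R : realType) (V : lmodType R[i]) (S : cstar_struct V)
  (x y : V) : V :=
  2^-1 *: (cmul S x y + cmul S y x).

(* Jordan *-homomorphism (linearity is carried by the type {linear A -> B}). *)
Definition jordan_star_hom (R : realType) (A B : lmodType R[i])
  (SA : cstar_struct A) (SB : cstar_struct B) (T : A -> B) : Prop :=
  (forall a b, T (jordan SA a b) = jordan SB (T a) (T b))
  /\ (forall x, T (cstar SA x) = cstar SB (T x)).

(* Main.v *)
Require Import Defs.
From HB Require Import structures.
From mathcomp Require Import all_boot all_order all_algebra.
From mathcomp Require Import complex.
From mathcomp Require Import all_classical all_reals.
From mathcomp Require Import ring lra.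
Set Implicit Arguments. Unset Strict Implicit. Unset Printing Implicit Defensive.
Import Order.TTheory GRing.Theory Num.Theory.
Local Open Scope ring_scope.
Local Open Scope complex_scope.

Section Scal.
Variable R : realType.
Lemma conjR (r : R) : Num.conj (r%:C) = r%:C.
Proof. by apply/eqP; rewrite eq_complex /= oppr0 !eqxx. Qed.
Lemma conj_i : Num.conj ('i%C : R[i]) = - 'i%C.
Proof. by apply/eqP; rewrite eq_complex /= oppr0 !eqxx. Qed.
Lemma conjK (a : R[i]) : Num.conj (Num.conj a) = a.
Proof. exact: conjCK. Qed.
Lemma ii : ('i%C : R[i]) * 'i%C = -1.
Proof. by rewrite -expr2 sqr_i. Qed.
Lemma half : (2^-1 : R)%:C = 2^-1.
Proof. by rewrite fmorphV rmorph_nat. Qed.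
End Scal.

Section Basic.
Variables (R : realType) (V : lmodType R[i]) (S : cstar_struct V).
Local Notation "x ** y" := (cmul S x y) (at level 40, left associativity).
Local Notation st := (cstar S).
Local Notation nm := (cnorm S).

Lemma z0 : (0:V) = (0:R[i]) *: (0:V). Proof. by rewrite scale0r. Qed.
Lemma cmul0l y : 0 ** y = 0.
Proof. by rewrite {1}z0 cmulZl scale0r. Qed.
Lemma cmul0r y : y ** 0 = 0.
Proof. by rewrite {1}z0 cmulZr scale0r. Qed.
Lemma cmulNl x y : (- x) ** y = - (x ** y).
Proof. by rewrite -scaleN1r cmulZl scaleN1r. Qed.
Lemma cmulNr x y : x ** (- y) = - (x ** y).
Proof. by rewrite -scaleN1r cmulZr scaleN1r. Qed.
Lemma cmulBl x y z : (x - y) ** z = x ** z - y ** z.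
Proof. by rewrite cmulDl cmulNl. Qed.
Lemma cmulBr x y z : z ** (x - y) = z ** x - z ** y.
Proof. by rewrite cmulDr cmulNr. Qed.
Lemma st0 : st 0 = 0.
Proof. by rewrite {1}z0 cstarZ rmorph0 scale0r. Qed.
Lemma stN x : st (- x) = - st x.
Proof. by rewrite -scaleN1r cstarZ rmorphN1 scaleN1r. Qed.
Lemma stB x y : st (x - y) = st x - st y.
Proof. by rewrite cstarD stN. Qed.

Lemma nmZr (r : R) x : 0 <= r -> nm (r%:C *: x) = r * nm x.
Proof.
move=> r0; apply: complexI; rewrite cnormZ ger0_norm ?ler0c //.
by rewrite rmorphM.
Qed.
Lemma nm0 : nm 0 = 0.
Proof. by rewrite {1}z0 -[0 : R[i]]/((0:R)%:C) nmZr // GRing.mul0r. Qed.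
Lemma nmN x : nm (- x) = nm x.
Proof.
apply: complexI; rewrite -scaleN1r cnormZ normrN1 mul1r //.
Qed.
Lemma nmB x y : nm (x - y) = nm (y - x).
Proof. by rewrite -nmN opprB. Qed.
Lemma nm_eq0 x : nm x = 0 -> x = 0. Proof. exact: cnorm_eq0. Qed.
Lemma nm_ge0 x : 0 <= nm x. Proof. exact: cnorm_ge0. Qed.

Lemma stst0 x : x ** st x = 0 -> x = 0.
Proof.
move=> h; have := cnorm_cstar_id S (st x); rewrite cstarK h nm0 => /esym/eqP.
rewrite sqrf_eq0 => /eqP/nm_eq0 h2.
by rewrite -(cstarK S x) h2 st0.
Qed.
Lemma stst0' x : st x ** x = 0 -> x = 0.
Proof.
move=> h; have := cnorm_cstar_id S x; rewrite h nm0 => /esym/eqP.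
by rewrite sqrf_eq0 => /eqP/nm_eq0.
Qed.

Lemma nm_st x : nm (st x) = nm x.
Proof.
have key : forall y, nm y <= nm (st y).
  move=> y; have := cnorm_cstar_id S y; have := cnormM S (st y) y => hle heq.
  rewrite heq expr2 in hle.
  have [->|yp] := eqVneq (nm y) 0; first exact: nm_ge0.
  have ypos : 0 < nm y by rewrite lt_def yp nm_ge0.
  by rewrite -(ler_pM2r ypos).
apply/eqP; rewrite eq_le key andbT.
by have := key (st x); rewrite cstarK.
Qed.
End Basic.
Section Geo.
Variable R0 : realType.
Lemma geo_small {R : realType} (e : R) : 0 < e -> exists N : nat, (2^-1) ^+ N < e.
Proof.
move=> e0.
have h : forall N : nat, (N.+1)%:R <= (2 : R) ^+ N.
  elim=> [|N IH]; first by rewrite expr0.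
  rewrite exprS -[N.+2]addn1 natrD -[N.+1]addn1 natrD in IH *. 
  have : 0 <= (N%:R : R) by [].
  lra.
pose N := Num.bound (e^-1).
exists N.
have ei : 0 <= e^-1 by rewrite invr_ge0 ltW.
have hb := archi_boundP ei.
have hN := h N.
have p2 : 0 < (2:R) ^+ N by apply: exprn_gt0.
rewrite exprVn -[e]invrK ltf_pV2 ?posrE ?invr_gt0 //.
apply: (lt_le_trans hb); apply: le_trans hN.
by rewrite ler_nat.
Qed.
End Geo.

Section Fix.
Variables (R : realType) (V : lmodType R[i]) (S : cstar_struct V).
Local Notation "x ** y" := (cmul S x y) (at level 40, left associativity).
Local Notation st := (cstar S).
Local Notation nm := (cnorm S).

Lemma nm_tri x y z : nm (x - z) <= nm (x - y) + nm (y - z).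
Proof.
have -> : x - z = (x - y) + (y - z) by rewrite addrA subrK.
exact: cnormD.
Qed.

Lemma nm_tri2 x y : nm y <= nm (x - y) + nm x.
Proof.
have -> : y = (- (x - y)) + x by rewrite opprB subrK.
by apply: le_trans (cnormD _ _ _) _; rewrite nmN opprB subrK.
Qed.

Lemma fixpt (F : V -> V) (P : V -> Prop) :
  (forall y, nm y <= 2^-1 -> nm (F y) <= 2^-1) ->
  (forall y z, nm y <= 2^-1 -> nm z <= 2^-1 -> nm (F y - F z) <= 2^-1 * nm (y - z)) ->
  P 0 -> (forall y, nm y <= 2^-1 -> P y -> P (F y)) ->
  (forall y, (forall e : R, 0 < e -> exists z, P z /\ nm (y - z) < e) -> P y) ->
  exists y, [/\ nm y <= 2^-1, F y = y & P y].
Proof.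
move=> Fb Fl P0 PF Pc.
pose u n := iter n F 0.
have uS n : u n.+1 = F (u n) by [].
have ub n : nm (u n) <= 2^-1 /\ P (u n).
  elim: n => [|n [IH1 IH2]]; first by rewrite /u /= nm0; split => //; lra.
  by rewrite uS; split; [apply: Fb | apply: PF].
pose q n : R := (2^-1) ^+ n.
have qS n : q n.+1 = q n / 2 by rewrite /q exprS mulrC.
have q0 n : 0 <= q n by apply: exprn_ge0; lra.
have step n : nm (u n.+1 - u n) <= q n.+1.
  elim: n => [|n IH].
    by rewrite /q expr1 /u /= subr0; apply: Fb; rewrite nm0; lra.
  have := Fl (u n.+1) (u n) (ub _).1 (ub _).1; rewrite -!uS => h.
  apply: (le_trans h).
  rewrite qS; have := q0 n.+1; lra.
have cau n j : nm (u (n + j)%N - u n) <= q n - q (n + j)%N.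
  elim: j => [|j IH]; first by rewrite addn0 !subrr nm0.
  apply: (le_trans (nm_tri _ (u (n + j)%N) _)).
  have := step (n + j)%N; rewrite addnS qS.
  have := q0 (n + j)%N; lra.
have qmono n j : q (n + j)%N <= q n.
  elim: j => [|j IH]; first by rewrite addn0.
  by rewrite addnS qS; have := q0 (n + j)%N; lra.
have [l hl] : exists l, forall e : R, 0 < e -> exists N : nat, forall n : nat,
        (N <= n)%N -> nm (u n - l) < e.
  apply: cnorm_complete => e e0.
  have [N hN] := @geo_small _ e e0.
  exists N => m n hm hn.
  wlog hnm : m n hm hn / (n <= m)%N.
    move=> W; case: (leqP n m) => h; first exact: W.
    by rewrite nmB; apply: W => //; apply: ltnW.
  rewrite -(subnKC hnm).
  apply: (le_lt_trans (cau _ _)).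
  have := q0 (n + (m - n))%N; have := qmono N (n - N)%N; rewrite (subnKC hn).
  rewrite /q in hN *; lra.
have hl2 : nm l <= 2^-1.
  apply/ler_addgt0Pr => e' e'0.
  have [N' hN'] := hl e' e'0.
  have k1 := hN' N' (leqnn N').
  have k2 := (ub N').1.
  have := nm_tri2 (u N') l.
  lra.
exists l; split => //.
- apply/eqP; rewrite -subr_eq0; apply/eqP/nm_eq0/eqP.
  rewrite eq_le nm_ge0 andbT; apply/ler_addgt0Pr => e e0.
  have e2 : 0 < e / 2 by lra.
  have [N hN] := hl _ e2.
  have h1 := hN N (leqnn N).
  have h1' := hN N.+1 (leqnSn N).
  have h4 := Fl _ _ hl2 (ub N).1.
  have : nm (F l - l) <= nm (F l - F (u N)) + nm (u N.+1 - l) by rewrite uS; apply: nm_tri.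
  rewrite nmB in h1.
  have := nm_ge0 S (l - u N).
  lra.
- apply: Pc => e e0.
  have [N hN] := hl e e0.
  by exists (u N); split; [exact: (ub N).2 | rewrite nmB; apply: hN].
Qed.
End Fix.

Section Unital.
Variables (R : realType) (V : lmodType R[i]) (S : cstar_struct V) (one : V).
Hypothesis hone : is_unit_elt S one.
Local Notation "x ** y" := (cmul S x y) (at level 40, left associativity).
Local Notation st := (cstar S).
Local Notation nm := (cnorm S).

Lemma m1l x : one ** x = x. Proof. exact: (hone x).1. Qed.
Lemma m1r x : x ** one = x. Proof. exact: (hone x).2. Qed.
Lemma st1 : st one = one.
Proof.
have := f_equal st (m1l (st one)).
by rewrite cstarM !cstarK m1l.
Qed.

Lemma nmM x y : nm (x ** y) <= nm x * nm y. Proof. exact: cnormM. Qed.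
Lemma nmD x y : nm (x + y) <= nm x + nm y. Proof. exact: cnormD. Qed.

Lemma neumann x : nm x <= 4^-1 ->
  exists g, (one + x) ** g = one /\ g ** (one + x) = one.
Proof.
move=> hx.
have hx0 := nm_ge0 S x.
have [yr [_ Fr _]] : exists y, [/\ nm y <= 2^-1, -x - x ** y = y & True].
  apply: (@fixpt _ _ S (fun y => -x - x ** y) (fun _ => True)) => //.
  - move=> y hy; apply: (le_trans (nmD _ _)); rewrite !nmN.
    have := nmM x y; have := nm_ge0 S y.
    have : nm x * nm y <= 4^-1 * 2^-1 by apply: ler_pM => //; apply: nm_ge0.
    lra.
  - move=> y z hy hz.
    have -> : (- x - x ** y) - (- x - x ** z) = x ** (z - y).
      by rewrite cmulBr opprB addrC addrA subrK addrC.
    apply: (le_trans (nmM _ _)); rewrite nmB.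
    have := nm_ge0 S (y - z).
    have : nm x * nm (y - z) <= 4^-1 * nm (y - z) by apply: ler_wpM2r => //; apply: nm_ge0.
    lra.
have [yl [_ Fl _]] : exists y, [/\ nm y <= 2^-1, -x - y ** x = y & True].
  apply: (@fixpt _ _ S (fun y => -x - y ** x) (fun _ => True)) => //.
  - move=> y hy; apply: (le_trans (nmD _ _)); rewrite !nmN.
    have := nmM y x; have := nm_ge0 S y.
    have : nm y * nm x <= 2^-1 * 4^-1 by apply: ler_pM => //; apply: nm_ge0.
    lra.
  - move=> y z hy hz.
    have -> : (- x - y ** x) - (- x - z ** x) = (z - y) ** x.
      by rewrite cmulBl opprB addrC addrA subrK addrC.
    apply: (le_trans (nmM _ _)); rewrite nmB.
    have := nm_ge0 S (y - z).
    have : nm (y - z) * nm x <= nm (y - z) * 4^-1 by apply: ler_wpM2l => //; apply: nm_ge0.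
    lra.
have hr : (one + x) ** (one + yr) = one.
  rewrite cmulDl !cmulDr !m1l m1r.
  rewrite -addrA.
  have -> : yr + (x + x ** yr) = 0 by rewrite -{1}Fr -opprD addNr.
  by rewrite addr0.
have hl : (one + yl) ** (one + x) = one.
  rewrite cmulDl !cmulDr !m1l m1r.
  rewrite -addrA.
  have -> : x + (yl + yl ** x) = 0 by rewrite -{1}Fl subrK subrr.
  by rewrite addr0.
exists (one + yr); split => //.
have e : one + yr = one + yl.
  transitivity (((one + yl) ** (one + x)) ** (one + yr)); first by rewrite hl m1l.
  by rewrite -cmulA hr m1r.
by rewrite e.
Qed.

Lemma sqrt_exists h : st h = h -> nm h <= 2^-1 ->
  exists k, [/\ st k = k, h ** k = k ** h & k ** k = one - h ** h].
Proof.
move=> sh nh.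
have nh0 := nm_ge0 S h.
have nhh : nm (h ** h) <= 4^-1.
  apply: (le_trans (nmM _ _)).
  have : nm h * nm h <= 2^-1 * 2^-1 by apply: ler_pM.
  lra.
pose c : R[i] := (2^-1 : R)%:C.
have [y [ny Fy [sy cy]]] : exists y, [/\ nm y <= 2^-1, c *: (h ** h + y ** y) = y
     & (st y = y /\ h ** y = y ** h)].
  apply: (@fixpt _ _ S (fun y => c *: (h ** h + y ** y))
                  (fun y => st y = y /\ h ** y = y ** h)).
  - move=> y hy; rewrite nmZr; last lra.
    have y0 := nm_ge0 S y.
    have : nm (y ** y) <= 4^-1.
      apply: (le_trans (nmM _ _)).
      have : nm y * nm y <= 2^-1 * 2^-1 by apply: ler_pM.
      lra.
    have := nmD (h ** h) (y ** y).
    lra.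
  - move=> y z hy hz.
    have -> : c *: (h ** h + y ** y) - c *: (h ** h + z ** z)
              = c *: (y ** (y - z) + (y - z) ** z).
      rewrite -scalerBr cmulBr cmulBl; congr (_ *: _).
      by rewrite opprD addrACA subrr add0r addrA subrK.
    rewrite nmZr; last lra.
    have y0 := nm_ge0 S y; have z0 := nm_ge0 S z; have d0 := nm_ge0 S (y - z).
    have h1 := nmM y (y - z); have h2 := nmM (y - z) z.
    have h3 := nmD (y ** (y - z)) ((y - z) ** z).
    have : nm y * nm (y - z) <= 2^-1 * nm (y - z) by apply: ler_wpM2r.
    have : nm (y - z) * nm z <= nm (y - z) * 2^-1 by apply: ler_wpM2l.
    lra.
  - by rewrite st0 cmul0l cmul0r.
  - move=> y _ [sy cy]; split.
      by rewrite cstarZ conjR cstarD !cstarM sh sy.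
    rewrite cmulZr cmulZl cmulDr cmulDl; congr (_ *: (_ + _)); first exact: cmulA.
    by rewrite cmulA cy -cmulA cy cmulA.
  - move=> y hy; split.
      apply/eqP; rewrite -subr_eq0; apply/eqP/nm_eq0/eqP.
      rewrite eq_le nm_ge0 andbT; apply/ler_addgt0Pr => e e0.
      have [|z [[sz _] hz]] := hy (e / 2); first lra.
      have := nm_tri S (st y) (st z) y.
      rewrite -stB nm_st sz [nm (z - y)]nmB; lra.
    apply/eqP; rewrite -subr_eq0; apply/eqP/nm_eq0/eqP.
    rewrite eq_le nm_ge0 andbT; apply/ler_addgt0Pr => e e0.
    have [|z [[_ cz] hz]] := hy e; first lra.
    have := nm_tri S (h ** y) (h ** z) (y ** h).
    rewrite -cmulBr cz -cmulBl.
    have h1 := nmM h (y - z); have h2 := nmM (z - y) h.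
    rewrite nmB in h2.
    have d0 := nm_ge0 S (y - z).
    have : nm h * nm (y - z) <= 2^-1 * nm (y - z) by apply: ler_wpM2r.
    have : nm (y - z) * nm h <= nm (y - z) * 2^-1 by apply: ler_wpM2l.
    lra.
exists (one - y); split.
- by rewrite stB st1 sy.
- by rewrite cmulBr cmulBl m1l m1r cy.
- have e2 : h ** h + y ** y = y + y.
    rewrite -[in RHS]Fy -scalerDl /c -rmorphD.
    have -> : (2^-1 + 2^-1 : R) = 1 by lra.
    by rewrite scale1r.
  have -> : h ** h = y + y - y ** y by rewrite -e2 addrK.
  rewrite cmulBr !cmulBl !m1l m1r.
  rewrite !opprB opprD -!addrA; congr (_ + _); by rewrite addrCA.
Qed.

Definition unitary u := u ** st u = one /\ st u ** u = one.

Lemma unitary_st u : unitary u -> unitary (st u).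
Proof. by case=> h1 h2; split; rewrite cstarK. Qed.

Lemma unit_of_sa h : st h = h -> nm h <= 2^-1 ->
  exists u, unitary u /\ h = (2^-1 : R[i]) *: (u + st u).
Proof.
move=> sh nh.
have [k [sk hk kk]] := sqrt_exists sh nh.
exists (h + 'i%C *: k).
have su : st (h + 'i%C *: k) = h + (- 'i%C) *: k by rewrite cstarD cstarZ conj_i sh sk.
rewrite /unitary su; split; last first.
  rewrite addrACA -scalerDl subrr scale0r addr0 -mulr2n -scalerMnr scalerMnl.
  by rewrite -mulr_natr mulVf ?scale1r // pnatr_eq0.
split.
- rewrite cmulDl !cmulDr !cmulZl !cmulZr scalerA -hk.
  rewrite addrA -[h ** h + _ + _]addrA -scalerDl addNr scale0r addr0.
  by rewrite mulrN ii opprK scale1r kk addrC subrK.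
- rewrite cmulDl !cmulDr !cmulZl !cmulZr scalerA -hk.
  rewrite addrA -[h ** h + _ + _]addrA -scalerDl subrr scale0r addr0.
  by rewrite mulNr ii opprK scale1r kk addrC subrK.
Qed.

Lemma sa_decomp h : st h = h ->
  exists u (c : R[i]), unitary u /\ h = c *: (u + st u).
Proof.
move=> sh.
pose r : R := nm h + 1.
have r0 : 0 < r by have := nm_ge0 S h; rewrite /r; lra.
pose h' := ((2 * r)^-1 : R)%:C *: h.
have sh' : st h' = h' by rewrite cstarZ conjR sh.
have nh' : nm h' <= 2^-1.
  rewrite nmZr; last by rewrite invr_ge0; lra.
  rewrite ler_pdivrMl; last lra.
  rewrite mulrAC mulfV ?mul1r /r; [lra | by rewrite pnatr_eq0].
have [u [uu hu]] := unit_of_sa sh' nh'.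
exists u, ((2 * r)%:C * 2^-1); split => //.
rewrite -scalerA -hu /h' scalerA -rmorphM mulfV ?scale1r //.
by apply/lt0r_neq0; lra.
Qed.

Lemma decomp x : exists u1 u2 (c1 c2 : R[i]), [/\ unitary u1, unitary u2 &
  x = c1 *: (u1 + st u1) + c2 *: (u2 + st u2)].
Proof.
pose h1 := (2^-1 : R)%:C *: (x + st x).
pose h2 := (2^-1 : R)%:C *: ('i%C *: (st x - x)).
have s1 : st h1 = h1.
  by rewrite /h1 cstarZ conjR cstarD cstarK addrC.
have s2 : st h2 = h2.
  rewrite /h2 !cstarZ conjR conj_i stB cstarK; congr (_ *: _).
  by rewrite scaleNr -scalerN opprB.
have [u1 [c1 [uu1 e1]]] := sa_decomp s1.
have [u2 [c2 [uu2 e2]]] := sa_decomp s2.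
exists u1, u2, c1, ('i%C * c2); split => //.
rewrite -scalerA -e2 -e1 /h1 /h2.
rewrite [X in _ = _ + X]scalerA mulrC -scalerA [X in _ = _ + _ *: X]scalerA ii scaleN1r opprB.
rewrite -scalerDr addrACA subrr addr0 -mulr2n -scalerMnr scalerMnl half.
by rewrite -mulr_natr mulVf ?scale1r // pnatr_eq0.
Qed.
End Unital.

Section Jp.
Variables (R : realType) (V : lmodType R[i]) (S : cstar_struct V).
Local Notation "x ** y" := (cmul S x y) (at level 40, left associativity).
Definition jp x y := x ** y + y ** x.
Lemma jp_triple x y : jp x (jp x y) = jp (x ** x) y + (x ** y ** x) *+ 2.
Proof.
rewrite /jp cmulDl !cmulDr !cmulA mulr2n.
by rewrite [_ ** y ** x + _]addrC addrACA.
Qed.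
Lemma mul2I (u v : V) : u *+ 2 = v *+ 2 -> u = v.
Proof.
move=> h; apply: (@scalerI _ _ (2 : R[i])); first by rewrite pnatr_eq0.
by rewrite !scaler_nat.
Qed.
End Jp.

Section Main.
Variables (R : realType) (A B : lmodType R[i]) (SA : cstar_struct A) (SB : cstar_struct B).
Variables (one : A) (p : A) (T : {linear A -> B}).
Hypothesis hone : is_unit_elt SA one.
Hypothesis hp : is_projection SA p.
Hypothesis hTp : star_hom_at SA SB T p.
Hypothesis hT1p : star_hom_at SA SB T (one - p).
Local Notation "x ⊙ y" := (cmul SA x y) (at level 40, left associativity).
Local Notation "x ⊛ y" := (cmul SB x y) (at level 40, left associativity).
Local Notation sa := (cstar SA).
Local Notation sb := (cstar SB).
Local Notation J := (T one).

Lemma TZ (a : R[i]) x : T (a *: x) = a *: T x. Proof. exact: linearZ. Qed.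
Lemma TD x y : T (x + y) = T x + T y. Proof. exact: raddfD. Qed.
Lemma TB x y : T (x - y) = T x - T y. Proof. exact: raddfB. Qed.

Lemma inv_rel w v : w ⊙ v = one -> v ⊙ w = one ->
  T w ⊛ sb (T (sa v)) = J /\ sb (T (sa v)) ⊛ T w = J.
Proof.
move=> wv vw.
have [sp_p sp_s] := hp.
have sf : sa (one - p) = one - p by rewrite stB (st1 hone) sp_s.
have pf : p + (one - p) = one by rewrite addrC subrK.
split.
- have h1 := (hTp.1 w (p ⊙ sa v)).
  have h2 := (hT1p.1 w ((one - p) ⊙ sa v)).
  rewrite !cstarM !cstarK sp_s sf !cmulA wv !(m1l hone) in h1 h2.
  have [_ e1] := h1 erefl; have [_ e2] := h2 erefl.
  by rewrite -pf TD -e1 -e2 -cmulDr -cstarD -TD -cmulDl pf (m1l hone).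
- have h1 := (hTp.2 (sa v ⊙ p) w).
  have h2 := (hT1p.2 (sa v ⊙ (one - p)) w).
  rewrite !cstarM !cstarK sp_s sf -!cmulA vw !(m1r hone) in h1 h2.
  have [_ e1] := h1 erefl; have [_ e2] := h2 erefl.
  by rewrite -pf TD -e1 -e2 -cmulDl -cstarD -TD -cmulDr pf (m1r hone).
Qed.

Lemma Jprops : sb J = J /\ J ⊛ J = J.
Proof.
have h1 : one ⊙ one = one by rewrite (m1l hone).
have [e1 e2] := inv_rel h1 h1.
rewrite (st1 hone) in e1 e2.
have sJ : sb J = J by rewrite -{2}e1 -{1}e1 cstarM cstarK.
by split => //; rewrite -{2}sJ.
Qed.
Lemma Jsa : sb J = J. Proof. exact: Jprops.1. Qed.
Lemma JJ : J ⊛ J = J. Proof. exact: Jprops.2. Qed.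

Lemma absU u : unitary SA one u -> J ⊛ T u = T u /\ T u ⊛ J = T u.
Proof.
move=> [h1 h2]; have [e1 e2] := inv_rel h1 h2; rewrite cstarK in e1 e2.
split.
- apply/eqP; rewrite eq_sym -subr_eq0; apply/eqP; apply: (@stst0 _ _ SB).
  rewrite stB cstarM Jsa cmulBl !cmulBr !cmulA e1.
  rewrite -[J ⊛ T u ⊛ sb (T u)]cmulA e1 JJ.
  by rewrite JJ !subrr.
- apply/eqP; rewrite eq_sym -subr_eq0; apply/eqP; apply: (@stst0' _ _ SB).
  rewrite stB cstarM Jsa cmulBl !cmulBr !cmulA e2.
  rewrite -[J ⊛ sb (T u) ⊛ T u]cmulA e2 JJ.
  by rewrite JJ !subrr.
Qed.

Lemma absL y : J ⊛ T y = T y.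
Proof.
have [u1 [u2 [c1 [c2 [uu1 uu2 ->]]]]] := decomp hone y.
rewrite TD !TZ !TD cmulDr !cmulZr !cmulDr.
by rewrite (absU uu1).1 (absU uu2).1 (absU (unitary_st uu1)).1 (absU (unitary_st uu2)).1.
Qed.
Lemma absR y : T y ⊛ J = T y.
Proof.
have [u1 [u2 [c1 [c2 [uu1 uu2 ->]]]]] := decomp hone y.
rewrite TD !TZ !TD cmulDl !cmulZl !cmulDl.
by rewrite (absU uu1).2 (absU uu2).2 (absU (unitary_st uu1)).2 (absU (unitary_st uu2)).2.
Qed.
Lemma absLs y : J ⊛ sb (T y) = sb (T y).
Proof. by rewrite -{1}Jsa -cstarM absR. Qed.
Lemma absRs y : sb (T y) ⊛ J = sb (T y).
Proof. by rewrite -{1}Jsa -cstarM absL. Qed.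

Lemma Cneq0 (r : R) : r != 0 -> (r%:C : R[i]) != 0.
Proof.
move=> hr; apply/eqP => h; move/eqP: hr; apply.
by apply: (@complexI R); rewrite h.
Qed.

Lemma sq x : T (x ⊙ x) = T x ⊛ T x.
Proof.
have x0 := nm_ge0 SA x.
pose r : R := (4 * (cnorm SA x + 1))^-1.
have r0 : 0 < r by rewrite /r invr_gt0; lra.
have hrx : r * cnorm SA x <= 4^-1.
  rewrite /r ler_pdivrMl; last lra.
  rewrite mulrAC mulfV ?mul1r; [lra | by rewrite pnatr_eq0].
pose a : R[i] := r%:C.
pose b : R[i] := (r / 2)%:C.
have na : cnorm SA (a *: x) <= 4^-1 by rewrite nmZr //; lra.
have nb : cnorm SA (b *: x) <= 4^-1.
  rewrite nmZr; last lra.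
  have -> : r / 2 * cnorm SA x = (r * cnorm SA x) / 2 by rewrite mulrAC.
  lra.
have ab0 : a - b != 0 by rewrite /a /b -rmorphB; apply: Cneq0; lra.
have ab1 : a * b != 0 by rewrite /a /b -rmorphM; apply: Cneq0; rewrite mulf_eq0; apply/norP; split; apply/eqP; lra.
have [ga [ha1 ha2]] := neumann hone na.
have [gb [hb1 hb2]] := neumann hone nb.
set wa := one + a *: x in ha1 ha2.
set wb := one + b *: x in hb1 hb2.
have [Ea1 Ea2] := inv_rel ha1 ha2.
have [Eb1 Eb2] := inv_rel hb1 hb2.
have hW1 : (wa ⊙ wb) ⊙ (gb ⊙ ga) = one.
  by rewrite -cmulA [wb ⊙ (gb ⊙ ga)]cmulA hb1 (m1l hone) ha1.
have hW2 : (gb ⊙ ga) ⊙ (wa ⊙ wb) = one.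
  by rewrite -cmulA [ga ⊙ (wa ⊙ wb)]cmulA ha2 (m1l hone) hb2.
have [EW1 EW2] := inv_rel hW1 hW2.
have inner : wb ⊙ (a *: ga - b *: gb) ⊙ wa = (a - b) *: one.
  rewrite cmulBr !cmulZr hb1 cmulBl !cmulZl -cmulA ha2 (m1r hone) (m1l hone).
  rewrite /wa /wb !scalerDr !scalerA mulrC opprD addrACA subrr addr0.
  by rewrite scalerBl.
have hV : (a - b) *: (gb ⊙ ga) = a *: ga - b *: gb.
  transitivity (gb ⊙ (wb ⊙ (a *: ga - b *: gb) ⊙ wa) ⊙ ga).
    by rewrite inner cmulZr (m1r hone) cmulZl.
  by rewrite !cmulA hb2 (m1l hone) -cmulA ha1 (m1r hone).
have hY : (a - b) *: sb (T (sa (gb ⊙ ga))) = a *: sb (T (sa ga)) - b *: sb (T (sa gb)).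
  have := f_equal (fun z => sb (T (sa z))) hV => /=.
  rewrite cstarZ TZ cstarZ conjK => ->.
  by rewrite stB TB stB !cstarZ !TZ !cstarZ !conjK.
set Xa := T wa in Ea1 Ea2 *; set Xb := T wb in Eb1 Eb2 *.
set Ya := sb (T (sa ga)) in Ea1 Ea2 hY.
set Yb := sb (T (sa gb)) in Eb1 Eb2 hY.
set YW := sb (T (sa (gb ⊙ ga))) in EW1 EW2 hY.
have eXa : Xa = J + a *: T x by rewrite /Xa /wa TD TZ.
have eXb : Xb = J + b *: T x by rewrite /Xb /wb TD TZ.
have comm : Xa ⊛ Xb = Xb ⊛ Xa.
  rewrite eXa eXb !cmulDl !cmulDr !cmulZl !cmulZr JJ absL absR !scalerA mulrC.
  by rewrite !addrA [J + b *: T x + _]addrAC.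
have MY : Xa ⊛ Xb ⊛ YW = J.
  apply: (scalerI ab0); rewrite -cmulZr hY cmulBr !cmulZr.
  rewrite [in Xa ⊛ Xb ⊛ Ya]comm -!cmulA Ea1 Eb1 eXa eXb !cmulDl !cmulZl JJ absR !scalerDr !scalerA mulrC.
  by rewrite opprD addrACA subrr addr0 scalerBl.
have MW : Xa ⊛ Xb = T (wa ⊙ wb).
  transitivity (Xa ⊛ Xb ⊛ J); first by rewrite -cmulA absR.
  by rewrite -EW2 cmulA MY absL.
move: MW.
rewrite eXa eXb !cmulDl !cmulDr !cmulZl !cmulZr JJ absL absR !scalerA.
rewrite !(m1l hone) !(m1r hone) !TD !TZ.
by move/addrI/addrI/(scalerI ab1) => ->.
Qed.

Lemma jordan2 x y : T (x ⊙ y + y ⊙ x) = T x ⊛ T y + T y ⊛ T x.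
Proof.
have := sq (x + y).
rewrite cmulDl !cmulDr !TD sq sq cmulDl !cmulDr.
rewrite !addrA => /addIr h.
by apply: (addrI (T x ⊛ T x)); rewrite !addrA.
Qed.

Lemma tripleT x y : T (x ⊙ y ⊙ x) = T x ⊛ T y ⊛ T x.
Proof.
apply: (@mul2I _ _).
have h1 := f_equal T (jp_triple SA x y).
have h2 := jp_triple SB (T x) (T y).
rewrite /jp in h1 h2.
rewrite !jordan2 TD raddfMn jordan2 sq in h1.
by move: h2; rewrite h1 => /addrI.
Qed.

Lemma starU u : unitary SA one u -> T (sa u) = sb (T u).
Proof.
move=> [h1 h2].
have [e1 e2] := inv_rel h1 h2; rewrite cstarK in e1 e2.
have tr : T u ⊛ T (sa u) ⊛ T u = T u.
  by rewrite -tripleT -cmulA h2 (m1r hone).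
transitivity (sb (T u) ⊛ T u ⊛ T (sa u) ⊛ (T u ⊛ sb (T u))).
  by rewrite e2 e1 absL absR.
transitivity (sb (T u) ⊛ (T u ⊛ T (sa u) ⊛ T u) ⊛ sb (T u)).
  by rewrite !cmulA.
by rewrite tr e2 absLs.
Qed.

Lemma starT y : T (sa y) = sb (T y).
Proof.
have [u1 [u2 [c1 [c2 [uu1 uu2 ->]]]]] := decomp hone y.
rewrite cstarD !cstarZ !cstarD !cstarK !TD !TZ !TD.
rewrite cstarD !cstarZ !cstarD.
by rewrite !(starU uu1) !(starU uu2) !cstarK.
Qed.

Lemma mainT : jordan_star_hom SA SB T.
Proof.
split; last exact: starT.
by move=> x y; rewrite /jordan TZ jordan2.
Qed.
End Main.

Unset Implicit Arguments.
Local Close Scope complex_scope.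

Theorem corollary2p12 (R : realType) (A B : lmodType R[i])
  (SA : cstar_struct A) (SB : cstar_struct B) (one : A)
  (hone : is_unit_elt SA one) (p : A) (hp : is_projection SA p)
  (T : {linear A -> B})
  (hTp : star_hom_at SA SB T p) (hT1p : star_hom_at SA SB T (one - p)) :
  jordan_star_hom SA SB T.
Proof.
exact: (mainT hone hp hTp hT1p).
Qed.
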